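(* Let $p_1,\dots,p_n$ be distinct primes with $p_i\equiv 5\pmod 8$ for all $i$, let $D=p_1\cdots p_n$, and let \[\mathcal{G}=\{a\in\mathbb{Z}: 1\leq a\leq D,\ \left(\tfrac{p_i}{a}\right)=1\text{ for all }1\leq i\leq n\}.\] Then $\mathfrak{s}_1=\sum_{a\in\mathcal{G}}a^2$ satisfies $\mathfrak{s}_1\equiv 2^{n-1}\mathfrak{t}\pmod 4$ for some odd integer $\mathfrak{t}$. In particular, if $n\geq 3$ then $4\mid\mathfrak{s}_1$.
   Context: $\left(\frac{p}{a}\right)$ denotes the Kronecker–Jacobi symbol. *)

(* Defs.v *)
From HB Require Import structures.
From mathcomp Require Import all_boot all_order all_algebra.
Set Implicit Arguments. Unset Strict Implicit. Unset Printing Implicit Defensive.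
Import Order.TTheory GRing.Theory Num.Theory.

Definition legendre (a q : nat) : int :=
  if q %| a then 0%R
  else if [exists x : 'I_q, (x * x == a %[mod q])%N] then 1%R else (-1)%R.

Definition kron_prime (a q : nat) : int :=
  if q == 2 then
    (if ~~ odd a then 0%R
     else if (a %% 8 == 1) || (a %% 8 == 7) then 1%R else (-1)%R)
  else legendre a q.

Definition kronecker (a m : nat) : int :=
  (\prod_(q <- primes m) kron_prime a q ^+ logn q m)%R.

(* Main.v *)
Require Import Defs.
From mathcomp Require Import all_boot all_order all_algebra.
From mathcomp Require Import zify ring lra.
Import GRing.Theory Num.Theory.
Set Implicit Arguments. Unset Strict Implicit.

Local Open Scope ring_scope.

Lemma natFp_eq (p a b : nat) : prime p ->
  ((a%:R : 'F_p) == b%:R) = (a == b %[mod p])%N.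
Proof. by move=> pp; rewrite -val_eqE /= !val_Fp_nat. Qed.

Lemma natFp_eq0 (p a : nat) : prime p -> ((a%:R : 'F_p) == 0) = (p %| a)%N.
Proof. by move=> pp; have E := natFp_eq a 0 pp; rewrite mod0n in E; exact: E. Qed.

Lemma Fp_fermat (p a : nat) : prime p -> ~~ (p %| a)%N ->
  (a%:R : 'F_p) ^+ p.-1 = 1.
Proof.
move=> pp na.
have a0 : (a%:R : 'F_p) != 0 by rewrite natFp_eq0.
apply: (mulfI a0); rewrite mulr1 -exprS prednK ?prime_gt0 //.
rewrite -natrX; apply/eqP; rewrite natFp_eq //; apply/eqP; exact: fermat_little.
Qed.

Lemma Fp_1neqm1 (p : nat) : prime p -> (2 < p)%N -> (1 : 'F_p) != -1.
Proof.
move=> pp p2; rewrite -subr_eq0 opprK -(natrD _ 1 1) natFp_eq0 //.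
apply/negP => /dvdn_leq; lia.
Qed.

Definition sgn3 (x : int) := [|| x == 0, x == 1 | x == -1].

Lemma legendre_sgn3 a p : sgn3 (legendre a p).
Proof. rewrite /legendre /sgn3; case: ifP => _ //; case: ifP => _ //. Qed.

Lemma sgn3_inj (p : nat) (x y : int) : prime p -> (2 < p)%N -> sgn3 x -> sgn3 y ->
  (x%:~R : 'F_p) = y%:~R -> x = y.
Proof.
move=> pp p2 hx hy.
have h1 := Fp_1neqm1 pp p2.
have h2 : (1 : 'F_p) != 0 by exact: oner_neq0.
have h3 : (-1 : 'F_p) != 0 by rewrite oppr_eq0.
case/or3P: hx => /eqP ->; case/or3P: hy => /eqP -> //=;
  rewrite ?mulr0z ?mulr1z ?mulrN1z => E.
- by move: h3; rewrite -E eqxx.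
- by move: h1; rewrite {1}E eqxx.
- by move: h3; rewrite E eqxx.
- by move: h1; rewrite E eqxx.
Qed.


Local Open Scope ring_scope.

Lemma sq_inj (p u v : nat) : prime p -> (0 < u)%N -> (0 < v)%N -> (u + v < p)%N ->
  ((u%:R : 'F_p) ^+ 2 == v%:R ^+ 2) -> u = v.
Proof.
move=> pp u0 v0 uvp; rewrite eqf_sqr => /orP [].
  rewrite natFp_eq // !modn_small //; [by move/eqP | lia | lia].
rewrite -addr_eq0 -natrD natFp_eq0 // => /dvdn_leq; lia.
Qed.

Lemma half_odd (p : nat) : odd p -> ((p.-1)./2 * 2 = p.-1)%N.
Proof. move=> op; have := odd_double_half p; rewrite op /=; lia. Qed.

Lemma EC (p a : nat) : prime p -> odd p ->
  (legendre a p)%:~R = (a%:R : 'F_p) ^+ (p.-1)./2.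
Proof.
move=> pp op; have p2 := odd_prime_gt2 op pp.
have h0 : (0 < (p.-1)./2)%N by lia.
have h2 := half_odd op.
rewrite /legendre; case: ifP => pa.
  by rewrite (eqP (_ : (a%:R : 'F_p) == 0)) ?natFp_eq0 // expr0n; case: ((p.-1)./2) h0.
case: ifP => [/existsP [x /eqP hx] | nqr].
  have xa : (a%:R : 'F_p) = x%:R ^+ 2.
    by apply/eqP; rewrite -natrX natFp_eq // -hx.
  have px : ~~ (p %| x)%N.
    apply/negP => /dvdnP [k kx]; move: pa; rewrite /dvdn -hx kx.
    by rewrite mulnA modnMl.
  by rewrite xa -exprM mulnC h2 Fp_fermat.
set y := (a%:R : 'F_p).
have ferm : (y ^+ (p.-1)./2) ^+ 2 = 1 by rewrite -exprM h2 Fp_fermat ?pa.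
move/eqP: ferm; rewrite sqrf_eq1 => /orP [/eqP y1 | /eqP ->]; last first.
  by rewrite mulrN1z.
exfalso.
set h := (p.-1)./2 in h0 h2 y1.
set rs := y :: [seq (k%:R : 'F_p) ^+ 2 | k <- iota 1 h].
suff [A B C] : [/\ ('X^h - 1 : {poly 'F_p}) != 0, all (root ('X^h - 1)) rs & uniq rs].
  by move: (max_poly_roots A B C); rewrite size_Xn_sub_1 // /rs /= size_map size_iota ltnn.
split.
- by rewrite -size_poly_eq0 size_Xn_sub_1.
- rewrite /= rootE !hornerE y1 subrr eqxx /=.
  apply/allP => z /mapP [k]; rewrite mem_iota => /andP [k1 k2] ->.
  rewrite rootE !hornerE -exprM mulnC h2 Fp_fermat ?subrr //.
  apply/negP => /dvdn_leq; lia.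
- rewrite /= map_inj_in_uniq ?iota_uniq ?andbT.
    apply/mapP => [[k]]; rewrite mem_iota => /andP [k1 k2] yk.
    move/negbT/negP: nqr; apply; apply/existsP.
    have kp : (k < p)%N by lia.
    exists (Ordinal kp); apply/eqP => /=.
    by apply/eqP; rewrite -natFp_eq // natrM -expr2 -yk.
  move=> u v; rewrite !mem_iota => /andP [u1 u2] /andP [v1 v2] E.
  apply: (sq_inj pp); try lia; by rewrite E.
Qed.


Local Open Scope ring_scope.

Lemma prod_sign (R : pzRingType) (s : seq nat) (b : nat -> bool) :
  \prod_(k <- s) (-1 : R) ^+ (b k) = (-1) ^+ (\sum_(k <- s) b k)%N.
Proof.
elim: s => [|x s IH]; first by rewrite !big_nil.
by rewrite !big_cons IH exprD.
Qed.

Lemma prod_const_seq (R : pzSemiRingType) (T : Type) (s : seq T) (x : R) :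
  \prod_(k <- s) x = x ^+ size s.
Proof.
elim: s => [|y s IH]; first by rewrite big_nil.
by rewrite big_cons IH exprS.
Qed.

Definition gr (p a k : nat) : nat :=
  if (k * a %% p <= (p.-1)./2)%N then (k * a %% p)%N else (p - k * a %% p)%N.

Lemma gr_eq (p a k : nat) : prime p ->
  ((k * a)%:R : 'F_p) = (-1) ^+ ((p.-1)./2 < k * a %% p)%N * (gr p a k)%:R.
Proof.
move=> pp; rewrite -(Fp_nat_mod pp) /gr; case: leqP => H /=.
  by rewrite mul1r.
have mp : (k * a %% p <= p)%N by apply: ltnW; rewrite ltn_mod prime_gt0.
by rewrite expr1 natrB // pchar_Fp_0 // sub0r mulN1r opprK.
Qed.

Lemma gr_range (p a k : nat) : prime p -> odd p -> ~~ (p %| a)%N ->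
  (1 <= k <= (p.-1)./2)%N -> (1 <= gr p a k <= (p.-1)./2)%N.
Proof.
move=> pp op pa /andP [k1 k2].
have h2 := half_odd op.
have p2 := odd_prime_gt2 op pp.
have nz : (k * a %% p != 0)%N.
  apply/negP => /eqP H; have : (p %| k * a)%N by rewrite /dvdn H.
  rewrite Euclid_dvdM // (negbTE pa) orbF => /dvdn_leq; lia.
have lt : (k * a %% p < p)%N by rewrite ltn_mod prime_gt0.
rewrite /gr; move: nz lt h2; set m := (k * a %% p)%N; set h := (p.-1)./2.
by case: (leqP m h) => H; lia.
Qed.

Lemma gr_perm (p a : nat) : prime p -> odd p -> ~~ (p %| a)%N ->
  perm_eq [seq gr p a k | k <- iota 1 (p.-1)./2] (iota 1 (p.-1)./2).
Proof.
move=> pp op pa.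
have h2 := half_odd op.
have p2 := odd_prime_gt2 op pp.
have U : uniq [seq gr p a k | k <- iota 1 (p.-1)./2].
  rewrite map_inj_in_uniq ?iota_uniq // => u v; rewrite !mem_iota => U V E.
  have Hu := gr_range pp op pa (_ : (1 <= u <= (p.-1)./2)%N).
  have a0 : (a%:R : 'F_p) ^+ 2 != 0 by rewrite expf_neq0 // natFp_eq0.
  apply: (sq_inj pp); try lia.
  rewrite -(inj_eq (mulIf a0)) -!exprMn -!natrM !gr_eq // !exprMn E.
  by rewrite -!exprM !(mulnC _ 2) !exprM !sqrrN !expr1n.
have S : {subset [seq gr p a k | k <- iota 1 (p.-1)./2] <= iota 1 (p.-1)./2}.
  move=> x /mapP [k]; rewrite !mem_iota => K ->.
  have := gr_range pp op pa (_ : (1 <= k <= (p.-1)./2)%N); lia.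
apply: uniq_perm => //; first exact: iota_uniq.
have L : (size (iota 1 (p.-1)./2) <= size [seq gr p a k | k <- iota 1 (p.-1)./2])%N.
  by rewrite size_map.
exact: (uniq_min_size U S L).2.
Qed.


Local Open Scope ring_scope.

Definition mu (p a : nat) : nat :=
  (\sum_(k <- iota 1 (p.-1)./2) ((p.-1)./2 < k * a %% p)%N)%N.

Definition eis (p a : nat) : nat :=
  (\sum_(k <- iota 1 (p.-1)./2) (k * a %/ p))%N.

Lemma gauss_lemma (p a : nat) : prime p -> odd p -> ~~ (p %| a)%N ->
  (a%:R : 'F_p) ^+ (p.-1)./2 = (-1) ^+ mu p a.
Proof.
move=> pp op pa.
have p2 := odd_prime_gt2 op pp.
have E1 : \prod_(k <- iota 1 (p.-1)./2) ((k * a)%:R : 'F_p) =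
   (\prod_(k <- iota 1 (p.-1)./2) (k%:R : 'F_p)) * a%:R ^+ (p.-1)./2.
  rewrite (eq_bigr (fun k => (k%:R : 'F_p) * a%:R)) => [|k _]; last by rewrite natrM.
  by rewrite big_split /= prod_const_seq size_iota.
have E2 : \prod_(k <- iota 1 (p.-1)./2) ((k * a)%:R : 'F_p) =
   (-1) ^+ mu p a * \prod_(k <- iota 1 (p.-1)./2) (k%:R : 'F_p).
  rewrite (eq_bigr _ (fun k _ => gr_eq a k pp)) big_split /= prod_sign.
  by rewrite -(big_map (gr p a) xpredT (fun k => (k%:R : 'F_p))) (perm_big _ (gr_perm pp op pa)).
have nz : \prod_(k <- iota 1 (p.-1)./2) (k%:R : 'F_p) != 0.
  rewrite prodf_seq_neq0; apply/allP => k; rewrite mem_iota => K /=.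
  by rewrite natFp_eq0 //; apply/negP => /dvdn_leq; lia.
by apply: (mulfI nz); rewrite -E1 E2 mulrC.
Qed.

Lemma eisenstein (p a : nat) : prime p -> odd p -> odd a -> ~~ (p %| a)%N ->
  odd (mu p a) = odd (eis p a).
Proof.
move=> pp op oa pa.
have h2 := half_odd op.
set s := iota 1 (p.-1)./2.
have E : forall k, (k * a + 2 * (((p.-1)./2 < k * a %% p)%N * gr p a k)
   = p * (k * a %/ p) + gr p a k + ((p.-1)./2 < k * a %% p)%N * p)%N.
  move=> k; rewrite /gr.
  have := divn_eq (k * a) p; have := ltn_mod (k * a) p; rewrite prime_gt0 //.
  move: h2; set q := (k * a %/ p)%N; set m := (k * a %% p)%N; set h := (p.-1)./2.
  by case: (leqP m h) => H /=; lia.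
have S : (\sum_(k <- s) (k * a + 2 * (((p.-1)./2 < k * a %% p)%N * gr p a k)) = \sum_(k <- s) (p * (k * a %/ p) + gr p a k + ((p.-1)./2 < k * a %% p)%N * p))%N.
  by apply: eq_bigr => k _; apply: E.
rewrite !big_split /= -big_distrl /= -!big_distrr /= -big_distrl /= in S.
rewrite -(big_map (gr p a) xpredT id) (perm_big _ (gr_perm pp op pa)) in S.
move/(congr1 odd): S; rewrite !oddD !oddM oa op /= /mu /eis.
have z : (\sum_(i <- s) 0 = 0)%N by rewrite big1.
rewrite z /= !andbT /s.
case: (odd (\sum_(i <- iota 1 _) i)); case: (odd (\sum_(i <- iota 1 _) (_ * gr p a i)));
 case: (odd (\sum_(i <- iota 1 _) (_ < _)%N)); by case: (odd (\sum_(i <- iota 1 _) (_ %/ p))).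
Qed.


Local Open Scope nat_scope.

Lemma sum_const_seq (T : Type) (s : seq T) (c : nat) : \sum_(k <- s) c = size s * c.
Proof. elim: s => [|x s IH]; first by rewrite big_nil. by rewrite big_cons IH mulSn. Qed.

Lemma count_le (n c : nat) : c <= n -> \sum_(j <- iota 1 n) (j <= c) = c.
Proof.
move=> cn; rewrite -(subnKC cn) iotaD big_cat /=.
rewrite (eq_big_seq (fun _ => 1)) => [|j]; last by rewrite mem_iota => /andP [_ H]; rewrite (_ : j <= c) //; lia.
rewrite sum_const_seq size_iota muln1 big1_seq ?addn0 // => j /andP [_]; rewrite mem_iota => /andP [H _].
by rewrite (_ : j <= c = false) //; lia.
Qed.

Lemma neq_jp_kq (p q j k : nat) : prime p -> prime q -> p != q -> 0 < k < p ->
  j * p != k * q.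
Proof.
move=> pp pq npq /andP [k0 kp]; apply/negP => /eqP E.
have : p %| k * q by rewrite -E dvdn_mull.
rewrite Euclid_dvdM // (dvdn_prime2 pp pq) (negbTE npq) orbF => /dvdn_leq; lia.
Qed.

Lemma eis_count (p q k : nat) : prime p -> prime q -> odd p -> odd q -> p != q ->
  1 <= k <= (p.-1)./2 ->
  k * q %/ p = \sum_(j <- iota 1 (q.-1)./2) (j * p < k * q).
Proof.
move=> pp pq op oq npq K.
have hp := half_odd op; have hq := half_odd oq.
have p0 := prime_gt0 pp; have q0 := prime_gt0 pq.
rewrite -[LHS](@count_le ((q.-1)./2)).
  apply: eq_big_seq => j; rewrite mem_iota => J.
  rewrite leq_divRL // ltn_neqAle neq_jp_kq //; lia.
rewrite -ltnS ltn_divLR //.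
move: hp hq K; set a := (p.-1)./2; set b := (q.-1)./2 => hp hq K.
have Ep : p = a * 2 + 1 by lia.
have Eq : q = b * 2 + 1 by lia.
rewrite Ep Eq; nia.
Qed.

Lemma lattice (p q : nat) : prime p -> prime q -> odd p -> odd q -> p != q ->
  eis p q + eis q p = (p.-1)./2 * (q.-1)./2.
Proof.
move=> pp pq op oq npq.
have p0 := prime_gt0 pp; have q0 := prime_gt0 pq.
have hp := half_odd op; have hq := half_odd oq.
rewrite /eis (eq_big_seq _ (fun k K => eis_count pp pq op oq npq _)); last first.
  by move=> k; rewrite mem_iota; lia.
rewrite [X in _ + X](eq_big_seq _ (fun k K => eis_count pq pp oq op _ _)); last first.
  by move=> k; rewrite mem_iota; lia.
  by rewrite eq_sym.
rewrite [X in _ + X]exchange_big -big_split /=.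
rewrite (eq_big_seq (fun _ => (q.-1)./2)) ?sum_const_seq ?size_iota //.
move=> k; rewrite mem_iota => K.
rewrite -big_split /= (eq_big_seq (fun _ => 1)) ?sum_const_seq ?size_iota ?muln1 //.
move=> j; rewrite mem_iota => J.
have := neq_jp_kq j pp pq npq (_ : 0 < k < p); last by lia.
Qed.


Local Open Scope ring_scope.

Lemma odd_of_mod (n : nat) : (n %% 2 = 1)%N -> odd n.
Proof. by rewrite modn2; case: (odd n). Qed.
Lemma even_of_mod (n : nat) : (n %% 2 = 0)%N -> odd n = false.
Proof. by rewrite modn2; case: (odd n). Qed.

Lemma sgn3M x y : sgn3 x -> sgn3 y -> sgn3 (x * y).
Proof.
by case/or3P => /eqP ->; case/or3P => /eqP ->.
Qed.

Lemma sgn3_sign n : sgn3 ((-1) ^+ n).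
Proof. by rewrite -signr_odd; case: (odd n). Qed.

Lemma legendre_mul (p a b : nat) : prime p -> odd p ->
  legendre (a * b) p = legendre a p * legendre b p.
Proof.
move=> pp op; have p2 := odd_prime_gt2 op pp.
apply: (sgn3_inj pp p2); rewrite ?legendre_sgn3 ?sgn3M ?legendre_sgn3 //.
by rewrite intrM !EC // natrM exprMn.
Qed.

Lemma legendre1 (p : nat) : prime p -> odd p -> legendre 1 p = 1.
Proof.
move=> pp op; have p2 := odd_prime_gt2 op pp.
apply: (sgn3_inj pp p2); first exact: legendre_sgn3.
  by [].
by rewrite EC // expr1n.
Qed.

Lemma legendre_mod (p a : nat) : prime p -> odd p ->
  legendre (a %% p) p = legendre a p.
Proof.
move=> pp op; have p2 := odd_prime_gt2 op pp.
by apply: (sgn3_inj pp p2); rewrite ?legendre_sgn3 // !EC // Fp_nat_mod.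
Qed.

Lemma legendre_exp (p q e : nat) : prime p -> odd p ->
  legendre (q ^ e) p = legendre q p ^+ e.
Proof.
move=> pp op; elim: e => [|e IH]; first by rewrite expn0 legendre1.
by rewrite expnS legendre_mul // IH exprS.
Qed.

Lemma legendre_prod (p : nat) (s : seq nat) (f : nat -> nat) : prime p -> odd p ->
  legendre (\prod_(x <- s) f x)%N p = \prod_(x <- s) legendre (f x) p.
Proof.
move=> pp op; elim: s => [|x s IH]; first by rewrite !big_nil legendre1.
by rewrite !big_cons legendre_mul // IH.
Qed.

Lemma legendre_sign (p a : nat) : prime p -> odd p -> ~~ (p %| a)%N ->
  legendre a p = (-1) ^+ mu p a.
Proof.
move=> pp op pa; have p2 := odd_prime_gt2 op pp.
apply: (sgn3_inj pp p2); rewrite ?legendre_sgn3 ?sgn3_sign //.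
by rewrite EC // gauss_lemma // intr_sign.
Qed.

Lemma reciprocity (p q : nat) : prime p -> prime q -> odd p -> odd q -> p != q ->
  (p %% 4 = 1)%N -> legendre p q = legendre q p.
Proof.
move=> pp pq op oq npq p4.
have npq' : ~~ (p %| q)%N by rewrite (dvdn_prime2 pp pq).
have nqp' : ~~ (q %| p)%N by rewrite (dvdn_prime2 pq pp) eq_sym.
rewrite !legendre_sign // -signr_odd -[in RHS]signr_odd.
rewrite !eisenstein //.
have L := lattice pp pq op oq npq.
have hp := half_odd op.
have ev : odd ((p.-1)./2) = false.
  apply: even_of_mod; move: hp; set h := (p.-1)./2 => hp; lia.
move/(congr1 odd): L; rewrite oddD oddM ev /= => E.
by move: E; case: (odd (eis q p)); case: (odd (eis p q)).
Qed.

Lemma supplement2 (p : nat) : prime p -> (p %% 8 = 5)%N -> legendre 2 p = -1.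
Proof.
move=> pp p8.
have op : odd p by apply: odd_of_mod; lia.
have pa : ~~ (p %| 2)%N by apply/negP => /dvdn_leq; lia.
rewrite legendre_sign // -signr_odd.
suff -> : odd (mu p 2) by [].
have hp := half_odd op.
set h := (p.-1)./2 in hp.
set c := (h %/ 2)%N.
have ch : (c <= h)%N by lia.
have C := count_le ch.
have T : (\sum_(k <- iota 1 h) ((k <= c) + (h < k * 2 %% p)) = h * 1)%N.
  transitivity (\sum_(k <- iota 1 h) 1)%N; last by rewrite sum_const_seq size_iota.
  apply: eq_big_seq => k; rewrite mem_iota => K.
  rewrite modn_small; last by lia.
  case: leqP => H; lia.
rewrite big_split /= C in T.
have : (mu p 2 = h - c)%N by rewrite /mu -/h; lia.
move=> ->; apply: odd_of_mod; lia.
Qed.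

Lemma kron_prime_eq (p q : nat) : prime p -> (p %% 8 = 5)%N -> prime q ->
  kron_prime p q = legendre q p.
Proof.
move=> pp p8 pq.
have op : odd p by apply: odd_of_mod; lia.
rewrite /kron_prime; case: eqP => [|q2].
  move=> ->; rewrite (supplement2 pp p8) op.
  have -> : (p %% 8 == 1)%N = false by apply/eqP; lia.
  have -> : (p %% 8 == 7)%N = false by apply/eqP; lia.
  by [].
have oq : odd q by case: (even_prime pq).
case: (eqVneq p q) => [<-|npq].
  by rewrite /legendre dvdnn.
apply: reciprocity => //; lia.
Qed.

Lemma kron_leg (p a : nat) : prime p -> (p %% 8 = 5)%N -> (0 < a)%N ->
  kronecker p a = legendre a p.
Proof.
move=> pp p8 a0.
have op : odd p by apply: odd_of_mod; lia.
rewrite /kronecker [in RHS](prod_prime_decomp a0) prime_decompE big_map /=.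
rewrite legendre_prod //; apply: eq_big_seq => q; rewrite mem_primes => /andP [qp _].
by rewrite legendre_exp // kron_prime_eq.
Qed.


Local Open Scope nat_scope.

Lemma crt2 (m M : nat) (P R : nat -> bool) : 0 < m -> 0 < M -> coprime m M ->
  \sum_(a < m * M) (P (a %% m) && R (a %% M)) =
  (\sum_(x < m) P x) * (\sum_(y < M) R y).
Proof.
move=> m0 M0 co.
pose f (a : 'I_(m * M)) : 'I_m * 'I_M := (Ordinal (ltn_pmod a m0), Ordinal (ltn_pmod a M0)).
have fi : injective f.
  move=> a b [] E1 E2; apply: val_inj => /=.
  have : (a == b %[mod m * M]) by rewrite chinese_remainder // E1 E2 !eqxx.
  by rewrite !modn_small // => /eqP.
have fb : bijective f by apply: inj_card_bij => //; rewrite card_prod !card_ord.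
rewrite big_distrl /=.
under [RHS]eq_bigr => x _ do rewrite big_distrr /=.
rewrite pair_big /=.
rewrite (reindex f (onW_bij _ fb)) /=.
by apply: eq_bigr => a _; rewrite -mulnb.
Qed.

Lemma dvd_prod_seq (ms : seq nat) (x : nat) : x \in ms -> x %| \prod_(m <- ms) m.
Proof. by move=> xm; rewrite (big_rem x xm) /= dvdn_mulr. Qed.

Lemma coprime_prod_primes (m : nat) (ms : seq nat) : prime m -> all prime ms -> m \notin ms ->
  coprime m (\prod_(j <- ms) j).
Proof.
elim: ms => [|j ms IH] /=; first by rewrite big_nil coprimen1.
move=> pm /andP [pj pms]; rewrite in_cons negb_or => /andP [mj mms].
rewrite big_cons coprimeMr IH // andbT prime_coprime // dvdn_prime2 //.
Qed.

Lemma prod_primes_gt0 (ms : seq nat) : all prime ms -> 0 < \prod_(j <- ms) j.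
Proof.
elim: ms => [|j ms IH] /=; first by rewrite big_nil.
by move=> /andP [pj pms]; rewrite big_cons muln_gt0 prime_gt0 // IH.
Qed.

Lemma crt_count (ms : seq nat) (Q : nat -> nat -> bool) : all prime ms -> uniq ms ->
  \sum_(a < \prod_(m <- ms) m) all (fun m => Q m (a %% m)) ms =
  \prod_(m <- ms) \sum_(x < m) Q m x.
Proof.
elim: ms => [|m ms IH] /=.
  by move=> _ _; rewrite !big_nil big_ord1.
move=> /andP [pm pms] /andP [mms ums].
rewrite !big_cons -IH //.
set M := \prod_(j <- ms) j.
have M0 : 0 < M by apply: prod_primes_gt0.
rewrite -(@crt2 m M (Q m) (fun y => all (fun j => Q j (y %% j)) ms) (prime_gt0 pm) M0); last by apply: coprime_prod_primes.
apply: eq_bigr => a _; congr (_ && _).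
apply: eq_in_all => j jms /=.
by rewrite modn_dvdm // dvd_prod_seq.
Qed.


Local Open Scope ring_scope.

Lemma sum_bool_count (T : Type) (s : seq T) (b : pred T) :
  (\sum_(x <- s) (b x : nat))%N = count b s.
Proof. elim: s => [|x s IH]; first by rewrite big_nil. by rewrite big_cons IH. Qed.

Lemma sum_ord_iota (n : nat) (F : nat -> nat) :
  (\sum_(x < n) F x)%N = (\sum_(x <- iota 0 n) F x)%N.
Proof. by rewrite -(big_mkord xpredT F) /index_iota subn0. Qed.

Lemma qr_count (p : nat) : prime p -> odd p ->
  (\sum_(x < p) (legendre x p == 1) = (p.-1)./2)%N.
Proof.
move=> pp op; have p2 := odd_prime_gt2 op pp; have h2 := half_odd op.
rewrite (sum_ord_iota p (fun x => nat_of_bool (legendre x p == 1))) sum_bool_count -size_filter.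
set h := (p.-1)./2 in h2 *.
transitivity (size [seq (k * k %% p)%N | k <- iota 1 h]); last by rewrite size_map size_iota.
apply: perm_size; apply: uniq_perm.
- by apply: filter_uniq; apply: iota_uniq.
- rewrite map_inj_in_uniq ?iota_uniq // => u v; rewrite !mem_iota => U V E.
  apply: (sq_inj pp); try lia.
  by rewrite -!natrX natFp_eq // !expnS !expn0 !muln1 E.
move=> x; rewrite mem_filter mem_iota add0n /=; apply/andP/mapP.
- case => L xp.
  move: L; rewrite /legendre; case: ifP => // px.
  case: ifP => [/existsP [y /eqP hy] _ | _ //].
  have y0 : (0 < y)%N.
    rewrite lt0n; apply/negP => /eqP y0; move: hy; rewrite y0 mul0n mod0n => hx.
    by move: px; rewrite /dvdn -hx.
  have yp := ltn_ord y.
  case: (leqP y h) => Yh.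
    by exists (nat_of_ord y); [rewrite mem_iota; lia | rewrite hy modn_small].
  exists (p - y)%N; first by rewrite mem_iota; lia.
  rewrite -(modn_small xp) -hy; apply/eqP; rewrite -natFp_eq //.
  rewrite !natrM natrB ?(ltnW yp) // pchar_Fp_0 // sub0r mulrNN //.
- case => k; rewrite mem_iota => K ->.
  split; last by rewrite ltn_mod prime_gt0.
  apply/eqP; apply: (sgn3_inj pp p2); rewrite ?legendre_sgn3 //.
  rewrite EC // Fp_nat_mod // natrM -expr2 -exprM mulnC h2 Fp_fermat //.
  apply/negP => /dvdn_leq; lia.
Qed.


Local Open Scope ring_scope.

Lemma sum_Posz (s : seq nat) (F : nat -> nat) :
  (\sum_(i <- s) F i)%N%:Z = \sum_(i <- s) (F i)%:Z.
Proof. elim: s => [|x s IH]; first by rewrite !big_nil. by rewrite !big_cons PoszD IH. Qed.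

Lemma odd_prod_seq (s : seq nat) (f : nat -> nat) : all (fun x => odd (f x)) s ->
  odd (\prod_(x <- s) f x)%N.
Proof.
elim: s => [|x s IH] /=; first by rewrite big_nil.
by move=> /andP [ox os]; rewrite big_cons oddM ox IH.
Qed.

Lemma legendre_neg (m D a : nat) : prime m -> (m %% 8 = 5)%N -> (m %| D)%N -> (a <= D)%N ->
  legendre (D - a) m = legendre a m.
Proof.
move=> pm m8 mD aD.
have om : odd m by apply: odd_of_mod; lia.
have m2 := odd_prime_gt2 om pm.
apply: (sgn3_inj pm m2); rewrite ?legendre_sgn3 //.
rewrite !EC // natrB // (eqP (_ : (D%:R : 'F_m) == 0)) ?natFp_eq0 // sub0r.
rewrite exprNn -signr_odd even_of_mod ?mul1r //.
have := half_odd om; set h := (m.-1)./2; lia.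
Qed.

Lemma legendre0 (m : nat) : legendre 0 m = 0.
Proof. by rewrite /legendre dvdn0. Qed.

Unset Implicit Arguments.
Theorem lemma3p7 (n : nat) (p : 'I_n -> nat) :
  (0 < n)%N ->
  injective p ->
  (forall i, prime (p i)) ->
  (forall i, p i %% 8 = 5)%N ->
  let D := (\prod_(i < n) p i)%N in
  let s1 : int :=
    (\sum_(1 <= a < D.+1 | [forall i, kronecker (p i) a == 1%R]) (a%:Z) ^+ 2)%R in
  (exists t : int, ~~ (2 %| t)%Z /\ (s1 = (2 ^+ (n - 1))%R * t %[mod 4])%Z)
  /\ ((3 <= n)%N -> (4 %| s1)%Z).
Proof.
move=> n0 pinj pp p8 D s1.
set ms := [seq p i | i <- index_enum 'I_n].
have msP : all prime ms by apply/allP => m /mapP [i _ ->].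
have msU : uniq ms by rewrite map_inj_uniq // index_enum_uniq.
have ms8 : forall m, m \in ms -> prime m /\ (m %% 8 = 5)%N.
  by move=> m /mapP [i _ ->].
have Dms : D = (\prod_(m <- ms) m)%N by rewrite big_map.
have D0 : (0 < D)%N by rewrite Dms prod_primes_gt0.
have mD : forall m, m \in ms -> (m %| D)%N by move=> m mm; rewrite Dms dvd_prod_seq.
pose G a := all (fun m => legendre (a %% m) m == 1) ms.
have GE : forall a, (0 < a)%N -> [forall i, kronecker (p i) a == 1] = G a.
  move=> a a0; rewrite /G all_map; apply/forallP/allP => /= H i.
    by move=> _; rewrite legendre_mod // -?kron_leg ?H //; apply: odd_of_mod; move: (p8 i); lia.
  by rewrite kron_leg // -legendre_mod ?(H i (mem_index_enum _)) //; apply: odd_of_mod; move: (p8 i); lia.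
pose i0 := Ordinal n0.
have m0 : p i0 \in ms by apply: map_f; exact: mem_index_enum.
have GD : forall a, (D %| a)%N -> G a = false.
  move=> a Da; apply/negP => /allP /(_ _ m0) /=.
  rewrite (eqP (_ : (a %% p i0 == 0)%N)) ?legendre0 //.
  by apply: dvdn_trans Da; apply: mD.
pose N := (\sum_(1 <= a < D.+1) (if G a then (a * a)%N else 0%N))%N.
pose O := (\sum_(1 <= a < D.+1) (if G a then (odd a : nat) else 0))%N.
pose E := (\sum_(1 <= a < D.+1) (if G a then ((~~ odd a) : nat) else 0))%N.
pose T := (\sum_(1 <= a < D.+1) (G a : nat))%N.
have s1N : s1 = N%:Z.
  rewrite /s1 big_mkcond /= /N sum_Posz; apply: eq_big_nat => a /andP [a0 _].
  by rewrite GE //; case: (G a) => //; rewrite expr2 PoszM.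
have NO : (N %% 4 = O %% 4)%N.
  rewrite /N /O -[LHS]modn_summ -[RHS]modn_summ; congr (_ %% 4)%N; apply: eq_bigr => a _.
  by case: (G a) => //; rewrite -modn2 /=; nia.
have TOE : T = (O + E)%N.
  by rewrite /T /O /E -big_split /=; apply: eq_bigr => a _; case: (G a); case: (odd a).
have OE : O = E.
  rewrite /O /E !big_nat_recr //= GD // !addn0 big_nat_rev.
  apply: eq_big_nat => a /andP [a1 aD].
  have -> : (1 + D - a.+1 = D - a)%N by lia.
  have -> : G (D - a)%N = G a.
    apply: eq_in_all => m mm /=; have [pm m8] := ms8 m mm.
    have om : odd m by apply: odd_of_mod; lia.
    by rewrite !legendre_mod // legendre_neg // ?mD //; apply: ltnW.
  rewrite oddB ?(ltnW aD) //.
  have -> : odd D by rewrite Dms; apply: odd_prod_seq; apply/allP => m mm; have [_ m8] := ms8 m mm; apply: odd_of_mod; lia.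
  by case: (G a); case: (odd a).
have TP : T = (\prod_(m <- ms) (m.-1)./2)%N.
  have -> : T = (\sum_(0 <= a < D.+1) (G a : nat))%N by rewrite [RHS]big_ltn // GD ?dvdn0.
  rewrite -[RHS](eq_big_seq _ (fun m mm => qr_count (proj1 (ms8 m mm)) _)); last first.
    move=> m mm; apply: odd_of_mod; have [_ m8] := ms8 m mm; lia.
  rewrite -(crt_count (fun m x => legendre x m == 1) msP msU) -Dms.
  rewrite big_nat_recr //= GD // addn0 big_mkord.
  by [].
set t' := (\prod_(m <- ms) ((m.-1)./2 %/ 2))%N.
have P2 : (\prod_(m <- ms) 2 = 2 ^ n)%N by rewrite /ms big_map big_const_ord iter_muln muln1.
have TP2 : T = (2 ^ n * t')%N.
  rewrite TP (eq_big_seq (fun m => 2 * ((m.-1)./2 %/ 2))%N); last first.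
    move=> m mm; have [pm m8] := ms8 m mm.
    have om : odd m by apply: odd_of_mod; lia.
    have := half_odd om; set h := (m.-1)./2; lia.
  by rewrite big_split /= P2.
have todd : odd t'.
  apply: odd_prod_seq; apply/allP => m mm; have [pm m8] := ms8 m mm.
  have om : odd m by apply: odd_of_mod; lia.
  apply: odd_of_mod; have := half_odd om; set h := (m.-1)./2; lia.
have En : (2 ^ n = 2 * 2 ^ (n - 1))%N by rewrite -expnS; congr (2 ^ _)%N; lia.
have Oeq : O = (2 ^ (n - 1) * t')%N.
  move: TP2; rewrite TOE -OE En -mulnA; set X := (2 ^ (n - 1) * t')%N; lia.
split.
  exists (Posz t'); split.
    have H : ~~ (2 %| t')%N by rewrite dvdn2 todd.
    exact: H.
  rewrite s1N (_ : (2 : int) ^+ (n - 1) = (2 ^ (n - 1))%N%:Z); last by rewrite -natz natrX.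
  by rewrite -PoszM !modz_nat NO Oeq.
move=> n3.
have : (4 %| O)%N.
  rewrite Oeq (_ : (n - 1 = 2 + (n - 3))%N); last by lia.
  by rewrite expnD -mulnA dvdn_mulr.
move=> H; rewrite s1N; have H2 : (4 %| N)%N by rewrite /dvdn NO.
exact: H2.
Qed.
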